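(* (i) For every $r\in\mathbb N$ and non-negative integers $n_1,\dots,n_r,m_1,\dots,m_r$, with $n=\sum_jn_j$, $m=\sum_jm_j$, $$\lim_{N\to\infty}\Big(\Big\langle\prod_{j=1}^r(E^N_-)^{n_j}(E^N_+)^{m_j}\Big\rangle^N_\beta-\big\langle(E^N_-)^n(E^N_+)^m\big\rangle^N_\beta\Big)=0,$$ so the limits of the two expectations coincide. (ii) If $X^N$ are operators on $\mathbb C^{2^N}\otimes\mathbb C^{2^N}$ with $\lim_{N\to\infty}\langle (X^N)^\dagger X^N\rangle^N_\beta=\lim_{N\to\infty}\|X^N|\Omega^N_\beta\rangle\|^2=0$, then for all non-negative integers $n,m$, $\lim_{N\to\infty}\langle(E^N_-)^n(E^N_+)^mX^N\rangle^N_\beta=0$.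
   Context: Fix real $\epsilon$, $T_c>0$, $\beta>0$. For $N\in\mathbb N$, on $(\mathbb C^2)^{\otimes N}$ let $S^N_i=\frac12\sum_{k=1}^N\sigma^{(k)}_i$ ($\sigma^{(k)}_i$ Pauli matrices at site $k$), $S^N_\pm=S^N_x\pm iS^N_y$, $H^N=-2\epsilon S^N_z-\frac{2T_c}{N}S^N_+S^N_-$, $\rho^N_\beta=e^{-\beta H^N}/\mathrm{Tr}\,e^{-\beta H^N}=\sum_ar_a|e_a\rangle\langle e_a|$ for an orthonormal eigenbasis $\{|e_a\rangle\}$ of $H^N$ of joint eigenvectors of $(\vec S^N)^2,S^N_z$. Let $|\Omega^N_\beta\rangle=\sum_a\sqrt{r_a}|e_a\rangle\otimes|e_a\rangle$ and $\langle X\rangle^N_\beta=\langle\Omega^N_\beta|X|\Omega^N_\beta\rangle$. Let $\mathfrak c=\lim_N(N^{-2}\mathrm{Tr}[\rho^N_\beta S^N_+S^N_-])^{1/2}$, assumed $>0$, and $E^N_\pm=\frac1{\mathfrak cN}S^N_\pm\otimes\mathbb I$. *)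

(* Defs.v *)
From HB Require Import structures.
From mathcomp Require Import all_boot all_order all_algebra.
From mathcomp Require Import all_classical all_reals all_analysis.
From mathcomp Require Import complex mxtens.

Set Implicit Arguments.
Unset Strict Implicit.
Unset Printing Implicit Defensive.

Import Order.TTheory GRing.Theory Num.Theory.
Local Open Scope ring_scope.
Local Open Scope complex_scope.

Section Model.
Variable R : realType.
Local Notation C := R[i].

(* Computational basis of (C^2)^{\otimes N}: basis vector |i>, i < 2^N;
   the spin at site k (0 <= k < N) is the k-th binary digit of i,
   digit 0 = spin up (sigma_z = +1), digit 1 = spin down. *)
Definition bit (i k : nat) : bool := odd (i %/ 2 ^ k).

Definition others_eq (N : nat) (k : 'I_N) (i j : nat) : bool :=
  [forall l : 'I_N, (l != k) ==> (bit i l == bit j l)].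

Definition sigma_x (N : nat) (k : 'I_N) : 'M[C]_(2 ^ N) :=
  \matrix_(i, j) (if (bit i k != bit j k) && others_eq k i j then 1 else 0).

Definition sigma_y (N : nat) (k : 'I_N) : 'M[C]_(2 ^ N) :=
  \matrix_(i, j)
    (if others_eq k i j then
       (if ~~ bit i k && bit j k then - 'i
        else if bit i k && ~~ bit j k then 'i else 0)
     else 0).

Definition sigma_z (N : nat) (k : 'I_N) : 'M[C]_(2 ^ N) :=
  \matrix_(i, j) (if i == j then (if bit i k then -1 else 1) else 0).

Definition Sx (N : nat) : 'M[C]_(2 ^ N) := 2^-1 *: \sum_(k < N) sigma_x k.
Definition Sy (N : nat) : 'M[C]_(2 ^ N) := 2^-1 *: \sum_(k < N) sigma_y k.
Definition Sz (N : nat) : 'M[C]_(2 ^ N) := 2^-1 *: \sum_(k < N) sigma_z k.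
Definition Splus (N : nat) : 'M[C]_(2 ^ N) := Sx N + 'i *: Sy N.
Definition Sminus (N : nat) : 'M[C]_(2 ^ N) := Sx N - 'i *: Sy N.
Definition Ssq (N : nat) : 'M[C]_(2 ^ N) :=
  Sx N *m Sx N + Sy N *m Sy N + Sz N *m Sz N.

Definition Ham (eps Tc : R) (N : nat) : 'M[C]_(2 ^ N) :=
  - ((2 * eps)%:C *: Sz N) - ((2 * Tc / N%:R)%:C *: (Splus N *m Sminus N)).

Definition adj (m n : nat) (A : 'M[C]_(m, n)) : 'M[C]_(n, m) :=
  (map_mx (@conjc R) A)^T.

Definition joint_eigenbasis (eps Tc : R) (N : nat)
    (e : 'I_(2 ^ N) -> 'cV[C]_(2 ^ N)) (lam : 'I_(2 ^ N) -> R) : Prop :=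
  [/\ forall a b, adj (e a) *m e b = (a == b)%:R%:M,
      forall a, Ham eps Tc N *m e a = (lam a)%:C *: e a,
      forall a, exists mu : C, Ssq N *m e a = mu *: e a &
      forall a, exists nu : C, Sz N *m e a = nu *: e a].

(* Gibbs weights r_a = e^{-beta lam_a} / sum_b e^{-beta lam_b}, so that
   rho = e^{-beta H}/Tr e^{-beta H} = sum_a r_a |e_a><e_a| *)
Definition gibbs_w (beta : R) (N : nat) (lam : 'I_(2 ^ N) -> R) (a : 'I_(2 ^ N)) : R :=
  expR (- beta * lam a) / \sum_(b < 2 ^ N) expR (- beta * lam b).

Definition rho (beta : R) (N : nat) (e : 'I_(2 ^ N) -> 'cV[C]_(2 ^ N))
    (lam : 'I_(2 ^ N) -> R) : 'M[C]_(2 ^ N) :=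
  \sum_(a < 2 ^ N) (gibbs_w beta lam a)%:C *: (e a *m adj (e a)).

Definition Omega (beta : R) (N : nat) (e : 'I_(2 ^ N) -> 'cV[C]_(2 ^ N))
    (lam : 'I_(2 ^ N) -> R) : 'cV[C]_(2 ^ N * 2 ^ N) :=
  \sum_(a < 2 ^ N) (Num.sqrt (gibbs_w beta lam a))%:C *: (e a *t e a).

Definition expect (beta : R) (N : nat) (e : 'I_(2 ^ N) -> 'cV[C]_(2 ^ N))
    (lam : 'I_(2 ^ N) -> R) (X : 'M[C]_(2 ^ N * 2 ^ N)) : C :=
  (adj (Omega beta e lam) *m X *m Omega beta e lam) 0 0.

Definition Eplus (c : R) (N : nat) : 'M[C]_(2 ^ N * 2 ^ N) :=
  ((c * N%:R)^-1)%:C *: (Splus N *t (1%:M : 'M[C]_(2 ^ N))).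
Definition Eminus (c : R) (N : nat) : 'M[C]_(2 ^ N * 2 ^ N) :=
  ((c * N%:R)^-1)%:C *: (Sminus N *t (1%:M : 'M[C]_(2 ^ N))).

End Model.

(* Main.v *)
Require Import Defs.
From HB Require Import structures.
From mathcomp Require Import all_boot all_order all_algebra.
From mathcomp Require Import all_classical all_reals all_analysis.
From mathcomp Require Import complex mxtens.
From mathcomp Require Import zify ring lra sesquilinear spectral.
Import Order.TTheory GRing.Theory Num.Theory numFieldNormedType.Exports.
Local Open Scope ring_scope.
Local Open Scope complex_scope.
Set Implicit Arguments.
Unset Strict Implicit.
Unset Printing Implicit Defensive.

Section Norms.
Variable R : realType.
Local Notation C := R[i].
Variable n : nat.

Definition ip (u v : 'cV[C]_n) : C := (adj u *m v) 0 0.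
Definition nrm (v : 'cV[C]_n) : C := sqrtC (ip v v).

Lemma ipE u v : ip u v = \sum_i (u i 0)^* * v i 0.
Proof. by rewrite /ip mxE; apply: eq_bigr => i _; rewrite !mxE. Qed.

Lemma ip_dot u v : ip u v = dotmx (v^T) (u^T).
Proof.
rewrite ipE dotmxE mxE; apply: eq_bigr => i _; rewrite !mxE mulrC.
by [].
Qed.

Lemma ip_ge0 v : 0 <= ip v v.
Proof. by rewrite ip_dot dnorm_ge0. Qed.

Lemma nrm_ge0 v : 0 <= nrm v.
Proof. by rewrite /nrm sqrtC_ge0 ip_ge0. Qed.

Lemma nrm_sq v : nrm v ^+ 2 = ip v v.
Proof. by rewrite /nrm sqrtCK. Qed.

Lemma CS u v : `|ip u v| <= nrm u * nrm v.
Proof.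
rewrite ip_dot /nrm !ip_dot mulrC.
exact: (CauchySchwarz_sqrt (@dotmx C n) _ _).1.
Qed.

Lemma nrmD u v : nrm (u + v) <= nrm u + nrm v.
Proof.
rewrite /nrm !ip_dot linearD /=.
exact: (triangle_lerif (@dotmx C n) _ _).1.
Qed.

Lemma ipZ a u v : ip (a *: u) (a *: v) = (a^* * a) * ip u v.
Proof.
rewrite !ipE mulr_sumr; apply: eq_bigr => i _; rewrite !mxE rmorphM /=.
by rewrite mulrACA.
Qed.

Lemma nrmZ a v : nrm (a *: v) = `|a| * nrm v.
Proof.
rewrite /nrm ipZ sqrtCM ?nnegrE ?ip_ge0 //; last by rewrite mulrC mul_conjC_ge0.
by congr (_ * _); rewrite normC_def mulrC.
Qed.

Lemma nrmN v : nrm (- v) = nrm v.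
Proof. by rewrite -scaleN1r nrmZ normrN normr1 mul1r. Qed.

Lemma nrm_sum I (r : seq I) (P : pred I) (F : I -> 'cV[C]_n) :
  nrm (\sum_(i <- r | P i) F i) <= \sum_(i <- r | P i) nrm (F i).
Proof.
elim/big_rec2: _ => [|i y1 y2 _ IH].
  by rewrite /nrm /ip mulmx0 mxE sqrtC0.
by apply: le_trans (nrmD _ _) _; rewrite lerD2l.
Qed.

Lemma nrm0 : nrm 0 = 0.
Proof. by rewrite /nrm /ip mulmx0 mxE sqrtC0. Qed.

End Norms.
Arguments ip {R n}.
Arguments nrm {R n}.

Section Bnd.
Variable R : realType.
Local Notation C := R[i].
Variable n : nat.
Implicit Types A B : 'M[C]_n.

Definition bnd A (K : C) := forall v : 'cV[C]_n, nrm (A *m v) <= K * nrm v.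

Lemma bnd_le A K K' : K <= K' -> bnd A K -> bnd A K'.
Proof.
move=> KK hA v; apply: le_trans (hA v) _.
by rewrite ler_wpM2r // nrm_ge0.
Qed.

Lemma bnd_mul A B K L : 0 <= K -> bnd A K -> bnd B L -> bnd (A *m B) (K * L).
Proof.
move=> K0 hA hB v; rewrite -mulmxA; apply: le_trans (hA _) _.
by rewrite -mulrA ler_wpM2l.
Qed.

Lemma bnd_add A B K L : bnd A K -> bnd B L -> bnd (A + B) (K + L).
Proof.
move=> hA hB v; rewrite mulmxDl; apply: le_trans (nrmD _ _) _.
by rewrite mulrDl lerD.
Qed.

Lemma bnd_scale a A K : bnd A K -> bnd (a *: A) (`|a| * K).
Proof.
by move=> hA v; rewrite -scalemxAl nrmZ -mulrA ler_wpM2l ?normr_ge0.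
Qed.

Lemma bnd_opp A K : bnd A K -> bnd (- A) K.
Proof. by move=> hA v; rewrite mulNmx nrmN. Qed.

Lemma bnd_sub A B K L : bnd A K -> bnd B L -> bnd (A - B) (K + L).
Proof. by move=> hA hB; apply: bnd_add => //; apply: bnd_opp. Qed.

Lemma bnd0 K : 0 <= K -> bnd 0 K.
Proof. by move=> K0 v; rewrite mul0mx nrm0 mulr_ge0 ?nrm_ge0. Qed.

Lemma bnd_sum I (r : seq I) (P : pred I) (F : I -> 'M[C]_n) (K : I -> C) :
  (forall i, P i -> bnd (F i) (K i)) ->
  bnd (\sum_(i <- r | P i) F i) (\sum_(i <- r | P i) K i).
Proof.
move=> h v; rewrite mulmx_suml mulr_suml.
apply: le_trans (nrm_sum _ _ _) _.
by apply: ler_sum => i Pi; apply: h.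
Qed.

Lemma bnd1 : bnd 1%:M 1.
Proof. by move=> v; rewrite mul1mx mul1r. Qed.

Lemma bnd_exp A K k : 0 <= K -> bnd A K -> bnd (A ^+ k) (K ^+ k).
Proof.
move=> K0 hA; elim: k => [|k IH]; first by rewrite expr0 expr0; exact: bnd1.
by rewrite exprS exprS -mulmxE; apply: bnd_mul.
Qed.

Lemma adj_mul m p q (X : 'M[C]_(m, p)) (Y : 'M[C]_(p, q)) :
  adj (X *m Y) = adj Y *m adj X.
Proof. by rewrite /adj map_mxM trmx_mul. Qed.

Lemma adjK m p (X : 'M[C]_(m, p)) : adj (adj X) = X.
Proof.
apply/matrixP => i j; rewrite !mxE; exact: conjcK.
Qed.

Lemma ip_adj A u v : ip (adj A *m u) v = ip u (A *m v).
Proof. by rewrite /ip adj_mul adjK mulmxA. Qed.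

Lemma bnd_adj A K : 0 <= K -> bnd A K -> bnd (adj A) K.
Proof.
move=> K0 hA v.
set x := nrm (adj A *m v).
have x0 : 0 <= x by exact: nrm_ge0.
have h : x ^+ 2 <= x * (K * nrm v).
  rewrite /x nrm_sq ip_adj.
  apply: le_trans (real_ler_norm _) _.
    by rewrite -ip_adj -nrm_sq realX // ger0_real // nrm_ge0.
  apply: le_trans (CS _ _) _.
  apply: le_trans (ler_wpM2l (nrm_ge0 v) (hA _)) _.
  by rewrite (mulrCA (nrm v)) (mulrCA (nrm (adj A *m v))) (mulrC (nrm v)).
clearbody x.
have [->|xn0] := eqVneq x 0; first by rewrite mulr_ge0 ?nrm_ge0.
have xp : 0 < x by rewrite lt_def xn0 x0.
by rewrite -(ler_pM2l xp) -expr2.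
Qed.

End Bnd.

Section PPerm.
Variable R : realType.
Local Notation C := R[i].
Variable n : nat.

Lemma ipE2 (v : 'cV[C]_n) : ip v v = \sum_i `|v i 0| ^+ 2.
Proof. by rewrite ipE; apply: eq_bigr => i _; rewrite normCK mulrC. Qed.

Lemma sum_one (Q : pred 'I_n) (F : 'I_n -> C) :
  (forall j k, Q j -> Q k -> j = k) ->
  `|\sum_j (if Q j then F j else 0)| ^+ 2 = \sum_j (if Q j then `|F j| ^+ 2 else 0).
Proof.
move=> uQ; case: (pickP Q) => [j0 Qj0|nQ].
  rewrite (bigD1 j0) //= big1 => [|j nj]; last first.
    by case: ifP => // Qj; case/eqP: nj; apply: uQ.
  rewrite (bigD1 j0) //= [X in _ = _ + X]big1 => [|j nj]; last first.
    by case: ifP => // Qj; case/eqP: nj; apply: uQ.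
  by rewrite Qj0 !addr0.
rewrite !big1 ?normr0 ?expr0n // => j _; by rewrite nQ.
Qed.

Lemma pperm_bnd (P : pred 'I_n) (g : 'I_n -> 'I_n) (d : 'I_n -> C) :
  {in P &, injective g} -> (forall j, `|d j| <= 1) ->
  bnd (\matrix_(i, j) (if P j && (i == g j) then d j else 0)) 1.
Proof.
move=> ig d1 v; rewrite mul1r /nrm ler_sqrtC ?nnegrE ?ip_ge0 //.
rewrite !ipE2.
have -> : \sum_i `|(\matrix_(i, j) (if P j && (i == g j) then d j else 0) *m v) i 0| ^+ 2
   = \sum_i \sum_j (if P j && (i == g j) then `|d j * v j 0| ^+ 2 else 0).
  apply: eq_bigr => i _; rewrite mxE.
  rewrite -(sum_one (Q := fun j => P j && (i == g j))); last first.
    move=> j k /andP[Pj /eqP ->] /andP[Pk /eqP]; exact: ig.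
  by congr (`|_| ^+ 2); apply: eq_bigr => j _; rewrite mxE; case: ifP; rewrite ?mul0r.
rewrite exchange_big /=; apply: ler_sum => j _.
case Pj: (P j) => /=; last by rewrite big1 // expr2 mulr_ge0.
rewrite (bigD1 (g j)) //= eqxx big1 => [|i ni]; last by rewrite (negbTE ni).
rewrite addr0 normrM exprMn -[X in _ <= X]mul1r ler_wpM2r ?exprn_ge0 //.
by rewrite expr_le1.
Qed.

End PPerm.

Local Open Scope nat_scope.

Lemma bit0 i : bit i 0 = odd i.
Proof. by rewrite /bit expn0 divn1. Qed.

Lemma bitS i l : bit i l.+1 = bit i./2 l.
Proof. by rewrite /bit expnS divnMA divn2. Qed.

Lemma bit_eq N (i j : nat) : i < 2 ^ N -> j < 2 ^ N ->
  (forall l, l < N -> bit i l = bit j l) -> i = j.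
Proof.
elim: N i j => [|N IH] i j.
  by rewrite expn0 !ltnS !leqn0 => /eqP-> /eqP->.
move=> hi hj hb.
rewrite -(odd_double_half i) -(odd_double_half j).
have -> : odd i = odd j by rewrite -!bit0 hb.
congr (_ + _.*2); apply: IH.
- by rewrite -ltn_double -!muln2 -expnSr; apply: leq_ltn_trans hi; rewrite muln2 -{2}(odd_double_half i) leq_addl.
- by rewrite -ltn_double -!muln2 -expnSr; apply: leq_ltn_trans hj; rewrite muln2 -{2}(odd_double_half j) leq_addl.
by move=> l hl; rewrite -!bitS hb.
Qed.

Lemma bit_ex N (f : nat -> bool) : {i | i < 2 ^ N & forall l, l < N -> bit i l = f l}.
Proof.
elim: N f => [|N IH] f; first by exists 0.
case: (IH (fun l => f l.+1)) => i hi hb.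
exists ((f 0) + i.*2).
  rewrite expnS -!muln2; case: (f 0) => /=; lia.
case=> [|l] hl; first by rewrite bit0 oddD odd_double addbF; case: (f 0).
by rewrite bitS half_bit_double hb.
Qed.

Local Open Scope ring_scope.
Local Open Scope complex_scope.

Section Flip.
Variable N : nat.

Definition flip (k : 'I_N) (j : 'I_(2 ^ N)) : 'I_(2 ^ N) :=
  let s := bit_ex N (fun l => if l == k then ~~ bit j k else bit j l) in
  Ordinal (s2valP s).

Lemma bit_flip k j l : (l < N)%N -> bit (flip k j) l = if l == k then ~~ bit j k else bit j l.
Proof.
move=> hl; rewrite /flip /=.
case: (bit_ex _ _) => i hi hb /=; exact: hb.
Qed.

Lemma ord_bit_eq (i j : 'I_(2 ^ N)) : (forall l, (l < N)%N -> bit i l = bit j l) -> i = j.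
Proof. by move=> h; apply/val_inj/(bit_eq (ltn_ord i) (ltn_ord j)). Qed.

Lemma flipK k : involutive (flip k).
Proof.
move=> j; apply: ord_bit_eq => l hl; rewrite !bit_flip //.
by case: eqP => // ->; rewrite eqxx negbK.
Qed.

Lemma flip_inj k : injective (flip k).
Proof. exact: inv_inj (flipK k). Qed.

Lemma bit_flip_other (k l : 'I_N) j : k != l -> bit (flip l j) k = bit j k.
Proof. by move=> kl; have kl' : (k : nat) != l := kl; rewrite bit_flip // (negbTE kl'). Qed.

Lemma flipC (k l : 'I_N) j : k != l -> flip k (flip l j) = flip l (flip k j).
Proof.
move=> kl; have kl' : (k : nat) != l := kl.
have lk' : (l : nat) != k by rewrite eq_sym.
apply: ord_bit_eq => m hm; rewrite !bit_flip //.
rewrite (negbTE kl') (negbTE lk').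
case: eqP => [mk|_]; case: eqP => [ml|_] //.
by move: kl'; rewrite -mk -ml eqxx.
Qed.

Lemma flip_eq k (i j : 'I_(2 ^ N)) :
  (i == flip k j) = others_eq k i j && (bit i k != bit j k).
Proof.
apply/eqP/andP => [->|[/forallP ho hk]].
  split; last by rewrite bit_flip // eqxx; case: (bit j k).
  apply/forallP => l; apply/implyP => lk; rewrite bit_flip //.
  by rewrite (inj_eq val_inj) (negbTE lk).
apply: ord_bit_eq => l hl; rewrite bit_flip //.
case: eqP => [->|lk]; first by move: hk; case: (bit i k); case: (bit j k).
have := ho (Ordinal hl); rewrite -(inj_eq val_inj) /=.
by move/implyP; move/(_ (introN eqP lk))/eqP.
Qed.

End Flip.

Section Spin.
Variable R : realType.
Local Notation C := R[i].
Variable N : nat.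
Local Notation n := (2 ^ N)%N.

Definition pmx (P : pred 'I_n) (g : 'I_n -> 'I_n) : 'M[C]_n :=
  \matrix_(i, j) (if P j && (i == g j) then 1 else 0).

Definition Pp (k : 'I_N) := pmx (fun j => bit j k) (flip k).
Definition Pm (k : 'I_N) := pmx (fun j => ~~ bit j k) (flip k).

Lemma pmx_mul P Q g h :
  pmx P g *m pmx Q h = pmx (fun j => Q j && P (h j)) (g \o h).
Proof.
apply/matrixP => i j; rewrite !mxE /=.
case Qj: (Q j) => /=.
  rewrite (bigD1 (h j)) //= big1 => [|m nm]; last first.
    by rewrite !mxE Qj /= eq_sym (negbTE nm) mulr0.
  by rewrite !mxE Qj eqxx mulr1 addr0.
by rewrite big1 // => m _; rewrite !mxE Qj /= mulr0.
Qed.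

Lemma ii : 'i * 'i = -1 :> C.
Proof. by rewrite -expr2 sqr_i. Qed.

Lemma half2 : (2^-1 + 2^-1 : C) = 1.
Proof. have h : (2 : C) != 0 by rewrite pnatr_eq0.
by field. Qed.

Lemma Splus_E : Splus R N = \sum_k Pp k.
Proof.
apply/matrixP => i j; rewrite !mxE.
rewrite !summxE !mulr_sumr -big_split /=.
apply: eq_bigr => k _; rewrite !mxE flip_eq.
case: (others_eq k i j) => /=.
  case: (bit i k); case: (bit j k) => /=; rewrite ?mulr0 ?addr0 //.
    by rewrite mulr1 (mulrCA 'i) ii mulrN1 subrr.
  by rewrite mulr1 !mulrN (mulrCA 'i) ii mulrN1 opprK half2.
by rewrite andbF !mulr0 addr0 andbF.
Qed.

Lemma Sminus_E : Sminus R N = \sum_k Pm k.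
Proof.
apply/matrixP => i j; rewrite !mxE !summxE !mulr_sumr -sumrN -big_split /=.
apply: eq_bigr => k _; rewrite !mxE flip_eq.
case: (others_eq k i j) => /=.
  case: (bit i k); case: (bit j k) => /=; rewrite ?mulr0 ?subr0 //.
    by rewrite mulr1 (mulrCA 'i) ii mulrN1 opprK half2.
  by rewrite mulr1 !mulrN (mulrCA 'i) ii mulrN1 opprK subrr.
by rewrite andbF !mulr0 subr0 andbF.
Qed.


Lemma pmx_bnd P g : {in P &, injective g} -> bnd (pmx P g) 1.
Proof. by move=> ig; apply: (@pperm_bnd _ _ P g (fun _ => 1)) => // j; rewrite normr1. Qed.

Lemma Pp_bnd k : bnd (Pp k) 1.
Proof. by apply: pmx_bnd => a b _ _; exact: flip_inj. Qed.

Lemma Pm_bnd k : bnd (Pm k) 1.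
Proof. by apply: pmx_bnd => a b _ _; exact: flip_inj. Qed.

Lemma sz_bnd (k : 'I_N) : bnd (sigma_z R k) 1.
Proof.
have -> : sigma_z R k = \matrix_(i, j) (if predT j && (i == id j) then
    (if bit j k then -1 else 1) else 0).
  by apply/matrixP => i j; rewrite !mxE /=; case: eqP => // ->.
apply: pperm_bnd => [a b _ _ //|j]; case: (bit j k); by rewrite ?normrN normr1.
Qed.

Lemma sumN (F : 'I_N -> C) : (forall k, F k = 1) -> \sum_k F k = N%:R.
Proof. by move=> h; rewrite (eq_bigr (fun _ => 1)) // sumr_const card_ord. Qed.

Lemma Splus_bnd : bnd (Splus R N) N%:R.
Proof. rewrite Splus_E -(sumN (F := fun _ => 1)) //; apply: bnd_sum => k _; exact: Pp_bnd. Qed.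

Lemma Sminus_bnd : bnd (Sminus R N) N%:R.
Proof. rewrite Sminus_E -(sumN (F := fun _ => 1)) //; apply: bnd_sum => k _; exact: Pm_bnd. Qed.

Lemma sumz_bnd : bnd (\sum_(k < N) sigma_z R k) N%:R.
Proof. rewrite -(sumN (F := fun _ => 1)) //; apply: bnd_sum => k _; exact: sz_bnd. Qed.

Lemma comm_same (k : 'I_N) : Pp k *m Pm k - Pm k *m Pp k = sigma_z R k.
Proof.
rewrite !pmx_mul; apply/matrixP => i j; rewrite !mxE /= flipK bit_flip // eqxx.
rewrite negbK andbb; case: eqP => [->|_]; last by rewrite !andbF subrr.
by case: (bit j k); rewrite /= ?subr0 ?sub0r.
Qed.

Lemma comm_diff (k l : 'I_N) : k != l -> Pp k *m Pm l = Pm l *m Pp k.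
Proof.
move=> kl; rewrite !pmx_mul; apply/matrixP => i j; rewrite !mxE /=.
rewrite bit_flip_other // bit_flip_other 1?eq_sym // flipC //.
by rewrite [flip l _ == i]eq_sym; case: (bit j k); case: (bit j l).
Qed.

Lemma comm_E : Splus R N *m Sminus R N - Sminus R N *m Splus R N = \sum_(k < N) sigma_z R k.
Proof.
rewrite Splus_E Sminus_E !mulmx_suml.
under eq_bigr do rewrite mulmx_sumr.
under [X in _ - X]eq_bigr do rewrite mulmx_sumr.
rewrite [X in _ - X]exchange_big -sumrB; apply: eq_bigr => k _.
rewrite -sumrB (bigD1 k) //= big1 ?addr0 ?comm_same // => l lk.
by rewrite comm_diff 1?eq_sym // subrr.
Qed.

End Spin.

Section Order.
Variable R : realType.
Local Notation C := R[i].
Variable n : nat.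
Variables (a b : 'M[C]_n) (Nr : C).
Hypothesis Nr0 : 0 < Nr.
Hypothesis ha : bnd a Nr.
Hypothesis hb : bnd b Nr.
Hypothesis hc : bnd (b * a - a * b) Nr.

Lemma bnd_mulr (A B : 'M[C]_n) K L : 0 <= K -> bnd A K -> bnd B L -> bnd (A * B) (K * L).
Proof. by rewrite -mulmxE; apply: bnd_mul. Qed.

Lemma bnd_eq (A : 'M[C]_n) K K' : K = K' -> bnd A K -> bnd A K'.
Proof. by move->. Qed.

Let Nr_ge0 : 0 <= Nr. Proof. exact: ltW. Qed.
Let Nr_neq0 : Nr != 0. Proof. by rewrite gt_eqF. Qed.

Lemma bnd_a p : bnd (a ^+ p) (Nr ^+ p).
Proof. exact: bnd_exp. Qed.
Lemma bnd_b p : bnd (b ^+ p) (Nr ^+ p).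
Proof. exact: bnd_exp. Qed.

Lemma comm1 p : bnd (b * a ^+ p - a ^+ p * b) (p%:R * Nr ^+ p.+1 / Nr).
Proof.
elim: p => [|p IH].
  by rewrite expr0 mulr1 mul1r subrr; apply: bnd0; rewrite mul0r mul0r.
have -> : b * a ^+ p.+1 - a ^+ p.+1 * b =
          (b * a ^+ p - a ^+ p * b) * a + a ^+ p * (b * a - a * b).
  rewrite mulrBl mulrBr !mulrA !exprSr !mulrA addrA subrK //.
apply: bnd_eq; last first.
  apply: bnd_add; first apply: bnd_mulr IH ha.
    by rewrite divr_ge0 ?mulr_ge0 ?exprn_ge0 ?ler0n.
  by apply: bnd_mulr (bnd_a p) hc; rewrite exprn_ge0.
by rewrite !exprS; field.
Qed.

Lemma comm2 m p : bnd (b ^+ m * a ^+ p - a ^+ p * b ^+ m) ((m * p)%:R * Nr ^+ (m + p) / Nr).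
Proof.
elim: m => [|m IH].
  by rewrite expr0 mulr1 mul1r subrr; apply: bnd0; rewrite mul0r mul0r.
have -> : b ^+ m.+1 * a ^+ p - a ^+ p * b ^+ m.+1 =
          b * (b ^+ m * a ^+ p - a ^+ p * b ^+ m) + (b * a ^+ p - a ^+ p * b) * b ^+ m.
  by rewrite !mulrBl !mulrBr !mulrA !exprS !mulrA addrA subrK.
apply: bnd_eq; last first.
  apply: bnd_add; first apply: bnd_mulr hb IH => //.
  apply: bnd_mulr (comm1 p) (bnd_b m).
  by rewrite divr_ge0 ?mulr_ge0 ?exprn_ge0 ?ler0n.
by rewrite addSn !exprS !exprD mulSn natrD natrM; field.
Qed.

End Order.

Section Word.
Variable R : realType.
Local Notation C := R[i].

Lemma word r (nn mm : 'I_r -> nat) : exists Cn : nat,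
  forall n (a b : 'M[C]_n) (Nr : C), 0 < Nr -> bnd a Nr -> bnd b Nr ->
  bnd (b * a - a * b) Nr ->
  bnd (\prod_(j < r) (a ^+ nn j * b ^+ mm j)
       - a ^+ (\sum_(j < r) nn j) * b ^+ (\sum_(j < r) mm j))
      (Cn%:R * Nr ^+ (\sum_(j < r) nn j + \sum_(j < r) mm j) / Nr).
Proof.
elim: r nn mm => [|r IH] nn mm.
  exists 0%N => n a b Nr _ _ _ _.
  by rewrite !big_ord0 !expr0 mulr1 subrr; apply: bnd0; rewrite !mul0r.
have [Cn hC] := IH (fun j => nn (widen_ord (leqnSn r) j)) (fun j => mm (widen_ord (leqnSn r) j)).
set A := \sum_(j < r) nn (widen_ord (leqnSn r) j) in hC.
set B := \sum_(j < r) mm (widen_ord (leqnSn r) j) in hC.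
exists (Cn + B * nn ord_max)%N => n a b Nr Nr0 ha hb hc.
have Nr_ge0 : 0 <= Nr by exact: ltW.
have Nr_neq0 : Nr != 0 by rewrite gt_eqF.
rewrite big_ord_recr /= (big_ord_recr r nn) (big_ord_recr r mm) /= -/A -/B.
set X := \prod_(i < r) _.
set D := X - a ^+ A * b ^+ B.
have hD : bnd D (Cn%:R * Nr ^+ (A + B) / Nr) by exact: hC.
have -> : X * (a ^+ nn ord_max * b ^+ mm ord_max)
    - a ^+ (A + nn ord_max) * b ^+ (B + mm ord_max)
  = D * a ^+ nn ord_max * b ^+ mm ord_max
    + a ^+ A * (b ^+ B * a ^+ nn ord_max - a ^+ nn ord_max * b ^+ B) * b ^+ mm ord_max.
  by rewrite /D !mulrBl !mulrBr !mulrA !exprD !mulrA mulrBl addrA subrK.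
have k1 : 0 <= Cn%:R * Nr ^+ (A + B) / Nr.
  by rewrite divr_ge0 ?mulr_ge0 ?exprn_ge0 ?ler0n.
have k2 : 0 <= (B * nn ord_max)%:R * Nr ^+ (B + nn ord_max) / Nr.
  by rewrite divr_ge0 ?mulr_ge0 ?exprn_ge0 ?ler0n.
have e1 := bnd_mulr (mulr_ge0 k1 (exprn_ge0 _ Nr_ge0))
   (bnd_mulr k1 hD (bnd_a Nr0 ha (nn ord_max))) (bnd_b Nr0 hb (mm ord_max)).
have e2 := bnd_mulr (mulr_ge0 (exprn_ge0 A Nr_ge0) k2)
   (bnd_mulr (exprn_ge0 A Nr_ge0) (bnd_a Nr0 ha A) (comm2 Nr0 ha hb hc B (nn ord_max)))
   (bnd_b Nr0 hb (mm ord_max)).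
apply: bnd_eq (bnd_add e1 e2).
by rewrite !exprD natrD natrM; field.
Qed.

End Word.

Section Tens.
Variable R : realType.
Local Notation C := R[i].

Lemma tens11 (X Y : 'M[C]_1) : (X *t Y) 0 0 = X 0 0 * Y 0 0.
Proof. by rewrite mxE !(ord1 (mxtens_unindex _).1) !(ord1 (mxtens_unindex _).2). Qed.

Lemma adj_tens m1 n1 m2 n2 (X : 'M[C]_(m1, n1)) (Y : 'M[C]_(m2, n2)) :
  adj (X *t Y) = adj X *t adj Y.
Proof. by rewrite /adj map_mxT trmx_tens. Qed.

Lemma adjD m1 n1 (X Y : 'M[C]_(m1, n1)) : adj (X + Y) = adj X + adj Y.
Proof. by apply/matrixP => i j; rewrite !mxE rmorphD. Qed.

Lemma adjZ m1 n1 k (X : 'M[C]_(m1, n1)) : adj (k *: X) = k^* *: adj X.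
Proof. by apply/matrixP => i j; rewrite !mxE rmorphM. Qed.

Lemma adj0 m1 n1 : adj (0 : 'M[C]_(m1, n1)) = 0.
Proof. by apply/matrixP => i j; rewrite !mxE rmorph0. Qed.

Lemma adj_sum m1 n1 I (r : seq I) (P : pred I) (F : I -> 'M[C]_(m1, n1)) :
  adj (\sum_(i <- r | P i) F i) = \sum_(i <- r | P i) adj (F i).
Proof. by apply: (big_morph _ (@adjD _ _) (@adj0 _ _)). Qed.

Lemma adj1 m : adj (1%:M : 'M[C]_m) = 1%:M.
Proof. by apply/matrixP => i j; rewrite !mxE eq_sym; case: eqP; rewrite ?conjc1 ?conjc0. Qed.

Lemma tens_one_mul m (X Y : 'M[C]_m) :
  (X *t (1%:M : 'M[C]_m)) *m (Y *t (1%:M : 'M[C]_m)) = (X *m Y) *t (1%:M : 'M[C]_m).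
Proof. by rewrite tensmx_mul mulmx1. Qed.

Lemma tens_one_one m : (1%:M : 'M[C]_m) *t (1%:M : 'M[C]_m) = 1%:M.
Proof.
apply/matrixP => i j.
case: (mxtens_indexP i) => i0 i1; case: (mxtens_indexP j) => j0 j1.
rewrite tensmxE !mxE.
rewrite (inj_eq (can_inj (@mxtens_indexK _ _))) xpair_eqE.
by case: (i0 == j0); case: (i1 == j1); rewrite ?mulr1 ?mulr0 ?mul0r.
Qed.

End Tens.

Section Expect.
Variable R : realType.
Local Notation C := R[i].
Variables (N : nat) (beta : R) (e : 'I_(2 ^ N) -> 'cV[C]_(2 ^ N)) (lam : 'I_(2 ^ N) -> R).
Hypothesis ortho : forall a b, adj (e a) *m e b = (a == b)%:R%:M.
Local Notation w := (gibbs_w beta lam).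
Local Notation Om := (Omega beta e lam).
Local Notation n := (2 ^ N)%N.

Lemma w_ge0 a : 0 <= w a.
Proof.
rewrite /gibbs_w divr_ge0 ?expR_ge0 //.
by apply: sumr_ge0 => b _; rewrite expR_ge0.
Qed.

Lemma sum_w : \sum_a w a = 1.
Proof.
rewrite /gibbs_w -mulr_suml mulfV //.
have i0 : (0 < 2 ^ N)%N by rewrite expn_gt0.
rewrite gt_eqF // (bigD1 (Ordinal i0)) //= ltr_pwDl ?expR_gt0 //.
by apply: sumr_ge0 => b _; rewrite expR_ge0.
Qed.

Lemma ip_e a b : ip (e a) (e b) = (a == b)%:R.
Proof. by rewrite /ip ortho mxE eqxx mulr1n. Qed.

Lemma sqrt_w a : (Num.sqrt (w a))%:C^* * (Num.sqrt (w a))%:C = (w a)%:C.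
Proof.
have h := sqr_sqrtr (w_ge0 a).
by apply/eqP; rewrite eq_complex /= oppr0 !mulr0 !mul0r subr0 addr0 -expr2 h !eqxx.
Qed.

Definition ee a : 'cV[C]_(n * n) := e a *t e a.
Definition eeA a : 'M[C]_(1, n * n) := adj (e a) *t adj (e a).

Lemma adj_ee a : adj (ee a) = eeA a.
Proof. exact: (adj_tens (e a) (e a)). Qed.

Lemma tens1_ee (X : 'M[C]_n) a :
  (X *t (1%:M : 'M[C]_n)) *m ee a = ((X *m e a) *t e a : 'cV[C]_(n * n)).
Proof. have := tensmx_mul X 1%:M (e a) (e a); rewrite mul1mx; exact. Qed.

Lemma eeA_ee a b (X : 'cV[C]_n) :
  (eeA b *m ((X *t e a) : 'cV[C]_(n * n))) 0 0 = (adj (e b) *m X) 0 0 * (adj (e b) *m e a) 0 0.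
Proof.
have h := tensmx_mul (adj (e b)) (adj (e b)) X (e a).
have := congr1 (fun M : 'M[C]_(1 * 1, 1 * 1) => M 0 0) h; rewrite /= tens11 => <-; reflexivity.
Qed.

Lemma sc00 k (M : 'M[C]_1) : (k *: M) 0 0 = k * M 0 0.
Proof. by rewrite mxE. Qed.

Lemma sm00 (k : C) : (k%:M : 'M[C]_1) 0 0 = k.
Proof. by rewrite mxE mulr1n. Qed.

Lemma expect_tens (B : 'M[C]_n) :
  expect beta e lam (B *t (1%:M : 'M[C]_n)) = \sum_a (w a)%:C * ip (e a) (B *m e a).
Proof.
rewrite /expect.
change Om with (\sum_a (Num.sqrt (w a))%:C *: ee a).
rewrite adj_sum.
under eq_bigr => i _ do rewrite adjZ adj_ee.
rewrite -mulmxA mulmx_sumr.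
under [X in _ *m X]eq_bigr => i _ do rewrite -scalemxAr tens1_ee.
rewrite mulmx_suml summxE; apply: eq_bigr => b _.
rewrite mulmx_sumr summxE (bigD1 b) //= big1 ?addr0 => [|a ab]; last first.
  by rewrite -scalemxAl -scalemxAr !sc00 eeA_ee ortho sm00 eq_sym (negbTE ab) !mulr0.
rewrite -scalemxAl -scalemxAr !sc00 eeA_ee ortho sm00 eqxx mulr1 mulrA sqrt_w.
by [].
Qed.

Lemma nrm_e a : nrm (e a) = 1.
Proof. by rewrite /nrm ip_e eqxx sqrtC1. Qed.

Lemma sub00 (M1 M2 : 'M[C]_1) : (M1 - M2) 0 0 = M1 0 0 - M2 0 0.
Proof. by rewrite !mxE. Qed.

Lemma expectB (X Y : 'M[C]_(n * n)) :
  expect beta e lam (X - Y) = expect beta e lam X - expect beta e lam Y.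
Proof. by rewrite /expect mulmxBr mulmxBl sub00. Qed.

Lemma expectZ k (X : 'M[C]_(n * n)) :
  expect beta e lam (k *: X) = k * expect beta e lam X.
Proof. by rewrite /expect -scalemxAr -scalemxAl sc00. Qed.

Lemma expect_bnd (D : 'M[C]_n) K : 0 <= K -> bnd D K ->
  `|expect beta e lam (D *t (1%:M : 'M[C]_n))| <= K.
Proof.
move=> K0 hD; rewrite expect_tens.
apply: le_trans (ler_norm_sum _ _ _) _.
have -> : K = \sum_a (w a)%:C * K by rewrite -mulr_suml -rmorph_sum /= sum_w mul1r.
apply: ler_sum => a _.
have wa : 0 <= (w a)%:C by rewrite ler0c w_ge0.
rewrite normrM ger0_norm // ler_wpM2l //.
apply: le_trans (CS _ _) _; rewrite nrm_e mul1r.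
by apply: le_trans (hD _) _; rewrite nrm_e mulr1.
Qed.

Lemma expect_XX (X : 'M[C]_(n * n)) :
  expect beta e lam (adj X *m X) = ip (X *m Om) (X *m Om).
Proof. by rewrite /expect /ip adj_mul !mulmxA. Qed.

Lemma expect_BX (B : 'M[C]_n) (X : 'M[C]_(n * n)) :
  expect beta e lam ((B *t (1%:M : 'M[C]_n)) *m X) =
  ip ((adj B *t (1%:M : 'M[C]_n)) *m Om) (X *m Om).
Proof. by rewrite /expect /ip adj_mul adj_tens adjK adj1 !mulmxA. Qed.

Lemma ip_BB (B : 'M[C]_n) :
  ip ((adj B *t (1%:M : 'M[C]_n)) *m Om) ((adj B *t (1%:M : 'M[C]_n)) *m Om)
  = expect beta e lam ((B *m adj B) *t (1%:M : 'M[C]_n)).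
Proof.
by rewrite /expect /ip adj_mul adj_tens adjK adj1 mulmxA -(mulmxA _ (B *t _)) tens_one_mul.
Qed.

Lemma expect_bnd2 (B : 'M[C]_n) (X : 'M[C]_(n * n)) K : 0 <= K -> bnd (adj B) K ->
  `|expect beta e lam ((B *t (1%:M : 'M[C]_n)) *m X)| <= K * nrm (X *m Om).
Proof.
move=> K0 hB; rewrite expect_BX; apply: le_trans (CS _ _) _.
rewrite ler_wpM2r ?nrm_ge0 //.
rewrite /nrm ip_BB expect_tens -(sqrCK K0) ler_sqrtC ?nnegrE ?exprn_ge0 //; last first.
  by apply: sumr_ge0 => a _; rewrite mulr_ge0 ?ler0c ?w_ge0 // -mulmxA -ip_adj ip_ge0.
have -> : K ^+ 2 = \sum_a (w a)%:C * K ^+ 2 by rewrite -mulr_suml -rmorph_sum /= sum_w mul1r.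
apply: ler_sum => a _; rewrite ler_wpM2l ?ler0c ?w_ge0 //.
rewrite -mulmxA -ip_adj -nrm_sq -[K ^+ 2]mulr1 -(expr1n _ 2) -(nrm_e a) -exprMn.
by rewrite lerXn2r ?nnegrE ?nrm_ge0 ?mulr_ge0 ?nrm_ge0 // hB.
Qed.

End Expect.

Section EOps.
Variable R : realType.
Local Notation C := R[i].
Variable n : nat.
Local Notation one := (1%:M : 'M[C]_n).

Lemma tens_pow (k : C) (S : 'M[C]_n) p :
  (k *: (S *t one)) ^+ p = k ^+ p *: (S ^+ p *t one).
Proof.
elim: p => [|p IH]; first by rewrite !expr0 scale1r tens_one_one.
by rewrite !exprS IH -mulmxE -scalemxAl -scalemxAr scalerA tens_one_mul mulmxE.
Qed.

Lemma tens_pm (k : C) (S T : 'M[C]_n) p q :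
  (k *: (S *t one)) ^+ p *m (k *: (T *t one)) ^+ q =
  k ^+ (p + q) *: ((S ^+ p * T ^+ q) *t one).
Proof.
by rewrite !tens_pow -scalemxAl -scalemxAr scalerA -exprD tens_one_mul mulmxE.
Qed.

Lemma tens_prod (k : C) (S T : 'M[C]_n) r (nn mm : 'I_r -> nat) :
  \prod_(j < r) ((k *: (S *t one)) ^+ nn j *m (k *: (T *t one)) ^+ mm j) =
  k ^+ (\sum_(j < r) nn j + \sum_(j < r) mm j) *:
    ((\prod_(j < r) (S ^+ nn j * T ^+ mm j)) *t one).
Proof.
elim: r nn mm => [|r IH] nn mm.
  by rewrite !big_ord0 expr0 scale1r tens_one_one.
rewrite !big_ord_recr /= IH tens_pm -mulmxE -scalemxAl -scalemxAr scalerA -exprD.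
rewrite tens_one_mul mulmxE.
by rewrite addnACA.
Qed.

Lemma tensB (W V : 'M[C]_n) : (W - V) *t one = W *t one - V *t one.
Proof. by apply/matrixP => i j; rewrite !mxE mulrBl. Qed.

End EOps.

Section Final.
Variable R : realType.
Local Notation C := R[i].

Lemma normc_le (z : C) (b : R) : `|z| <= b%:C -> Normc.normc z <= b.
Proof. by rewrite -lecR. Qed.

Lemma sqrtC_real (z : C) : 0 <= z -> sqrtC z = (Num.sqrt (Normc.normc z))%:C.
Proof.
move=> z0; set x := Normc.normc z.
have h0 : 0 <= x.
  by have := normr_ge0 z; rewrite -[`|z|]/((Normc.normc z)%:C) ler0c.
have zx : z = x%:C by rewrite /x -[LHS]ger0_norm.
have e : x%:C = (Num.sqrt x)%:C ^+ 2 by rewrite -rmorphXn /= sqr_sqrtr.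
by rewrite zx e sqrCK // ler0c sqrtr_ge0.
Qed.


Lemma comm_bnd N : bnd (Splus R N * Sminus R N - Sminus R N * Splus R N) N%:R.
Proof. by rewrite -!mulmxE comm_E; exact: sumz_bnd. Qed.

Lemma bound_i (c : R) (beta : R) (N : nat) (e : 'I_(2 ^ N) -> 'cV[C]_(2 ^ N))
  (lam : 'I_(2 ^ N) -> R) r (nn mm : 'I_r -> nat) (Cn : nat) :
  0 < c -> (0 < N)%N ->
  (forall a b, adj (e a) *m e b = (a == b)%:R%:M) ->
  (forall n (a b : 'M[C]_n) (Nr : C), 0 < Nr -> bnd a Nr -> bnd b Nr ->
     bnd (b * a - a * b) Nr ->
     bnd (\prod_(j < r) (a ^+ nn j * b ^+ mm j)
       - a ^+ (\sum_(j < r) nn j) * b ^+ (\sum_(j < r) mm j))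
      (Cn%:R * Nr ^+ (\sum_(j < r) nn j + \sum_(j < r) mm j) / Nr)) ->
  Normc.normc (expect beta e lam
                 (\prod_(j < r) (Eminus c N ^+ nn j *m Eplus c N ^+ mm j))
               - expect beta e lam
                 (Eminus c N ^+ (\sum_(j < r) nn j) *m Eplus c N ^+ (\sum_(j < r) mm j)))
  <= Cn%:R / (c ^+ (\sum_(j < r) nn j + \sum_(j < r) mm j) * N%:R).
Proof.
move=> c0 N0 ortho hC.
set k : C := ((c * N%:R)^-1)%:C.
have k0 : 0 <= k by rewrite ler0c invr_ge0 mulr_ge0 ?ler0n // ltW.
have eE : Eminus c N = k *: (Sminus R N *t (1%:M : 'M[C]_(2 ^ N))) by [].
have eP : Eplus c N = k *: (Splus R N *t (1%:M : 'M[C]_(2 ^ N))) by [].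
rewrite eE eP tens_prod tens_pm !expectZ -mulrBr -expectB -tensB.
set L := (\sum_(j < r) nn j + \sum_(j < r) mm j)%N.
apply: normc_le; rewrite normrM normrX (ger0_norm k0).
have Npos : 0 < (N%:R : C) by rewrite ltr0n.
have hD := hC _ (Sminus R N) (Splus R N) N%:R Npos (@Sminus_bnd R N) (@Splus_bnd R N) (@comm_bnd N).
have K0 : 0 <= Cn%:R * (N%:R : C) ^+ L / N%:R.
  by rewrite divr_ge0 ?mulr_ge0 ?exprn_ge0 ?ler0n.
apply: le_trans (ler_wpM2l (exprn_ge0 _ k0) (expect_bnd beta lam ortho K0 hD)) _.
rewrite le_eqVlt; apply/orP; left; apply/eqP.
have cC : c%:C != 0 by rewrite (inj_eq (@complexI R)) gt_eqF.
have NC : (N%:R : C) != 0 by rewrite gt_eqF.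
rewrite /k !(rmorphM, rmorphXn, fmorphV, rmorph_nat) /=.
rewrite exprVn exprMn.
have X0 : c%:C ^+ L != 0 by rewrite expf_neq0.
have Y0 : (N%:R : C) ^+ L != 0 by rewrite expf_neq0.
move: X0 Y0; set X := c%:C ^+ L; set Y := (N%:R : C) ^+ L => X0 Y0.
by field; rewrite NC X0 Y0.
Qed.

Lemma bound_ii (c : R) (beta : R) (N : nat) (e : 'I_(2 ^ N) -> 'cV[C]_(2 ^ N))
  (lam : 'I_(2 ^ N) -> R) (X : 'M[C]_(2 ^ N * 2 ^ N)) (n m : nat) :
  0 < c -> (0 < N)%N ->
  (forall a b, adj (e a) *m e b = (a == b)%:R%:M) ->
  Normc.normc (expect beta e lam (Eminus c N ^+ n *m Eplus c N ^+ m *m X))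
  <= (c ^+ (n + m))^-1 * Num.sqrt (Normc.normc (expect beta e lam (adj X *m X))).
Proof.
move=> c0 N0 ortho.
set k : C := ((c * N%:R)^-1)%:C.
have k0 : 0 <= k by rewrite ler0c invr_ge0 mulr_ge0 ?ler0n // ltW.
have eE : Eminus c N = k *: (Sminus R N *t (1%:M : 'M[C]_(2 ^ N))) by [].
have eP : Eplus c N = k *: (Splus R N *t (1%:M : 'M[C]_(2 ^ N))) by [].
rewrite eE eP tens_pm -scalemxAl expectZ.
apply: normc_le; rewrite normrM normrX (ger0_norm k0).
have Npos : 0 < (N%:R : C) by rewrite ltr0n.
have N0' : 0 <= (N%:R : C) by rewrite ler0n.
have hV := bnd_mulr (exprn_ge0 n N0') (bnd_exp n N0' (@Sminus_bnd R N)) (bnd_exp m N0' (@Splus_bnd R N)).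
have K0 : 0 <= (N%:R : C) ^+ n * (N%:R : C) ^+ m by rewrite mulr_ge0 ?exprn_ge0.
have hA := bnd_adj K0 hV.
apply: le_trans (ler_wpM2l (exprn_ge0 _ k0) (expect_bnd2 beta lam ortho X K0 hA)) _.
rewrite /nrm -expect_XX sqrtC_real; last by rewrite expect_XX ip_ge0.
rewrite le_eqVlt; apply/orP; left; apply/eqP.
set s := Num.sqrt _.
have cC : c%:C != 0 by rewrite (inj_eq (@complexI R)) gt_eqF.
have NC : (N%:R : C) != 0 by rewrite gt_eqF.
rewrite /k !(rmorphM, rmorphXn, fmorphV, rmorph_nat) /=.
rewrite exprVn !exprMn !exprD.
have X0 : c%:C ^+ n != 0 by rewrite expf_neq0.
have X1 : c%:C ^+ m != 0 by rewrite expf_neq0.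
have Y0 : (N%:R : C) ^+ n != 0 by rewrite expf_neq0.
have Y1 : (N%:R : C) ^+ m != 0 by rewrite expf_neq0.
move: X0 X1 Y0 Y1.
set x0 := c%:C ^+ n; set x1 := c%:C ^+ m; set y0 := (N%:R : C) ^+ n; set y1 := (N%:R : C) ^+ m.
move=> X0 X1 Y0 Y1.
by field; rewrite X0 X1 Y0 Y1.
Qed.

End Final.

Unset Implicit Arguments.
Local Open Scope classical_set_scope.
Local Open Scope complex_scope.

Lemma normc_ge0' (R : realType) (z : R[i]) : 0 <= Normc.normc z.
Proof. by have := normr_ge0 z; rewrite -[`|z|]/((Normc.normc z)%:C) ler0c. Qed.

Lemma inv_le_harm (R : realType) (N : nat) : (0 < N)%N ->
  (N%:R : R)^-1 <= 2 * harmonic N.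
Proof.
move=> N0; rewrite /harmonic /=.
have x1 : (1 : R) <= N%:R by rewrite ler1n.
rewrite -[leLHS]mul1r ler_pdivrMr ?ltr0n // mulrAC ler_pdivlMr ?ltr0n //.
rewrite mul1r -addn1 natrD; lra.
Qed.

Theorem corollary1 (R : realType) (eps Tc beta c : R)
  (e : forall N : nat, 'I_(2 ^ N) -> 'cV[R[i]]_(2 ^ N))
  (lam : forall N : nat, 'I_(2 ^ N) -> R) :
  0 < Tc -> 0 < beta ->
  (forall N, joint_eigenbasis eps Tc (e N) (lam N)) ->
  (* c = lim_N (N^-2 Tr[rho S_+ S_-])^(1/2), assumed > 0 *)
  (fun N : nat => Num.sqrt
     (complex.Re (\tr (rho beta (e N) (lam N) *m (Splus R N *m Sminus R N)))
      / N%:R ^+ 2)) @ \oo --> c ->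
  0 < c ->
  (* (i) *)
  (forall (r : nat) (n m : 'I_r -> nat),
     (fun N : nat =>
        Normc.normc (expect beta (e N) (lam N)
                 (\prod_(j < r) (Eminus c N ^+ n j *m Eplus c N ^+ m j))
               - expect beta (e N) (lam N)
                 (Eminus c N ^+ (\sum_(j < r) n j) *m Eplus c N ^+ (\sum_(j < r) m j))))
       @ \oo --> (0 : R))
  /\
  (* (ii) *)
  (forall X : forall N : nat, 'M[R[i]]_(2 ^ N * 2 ^ N),
     (fun N : nat => Normc.normc (expect beta (e N) (lam N) (adj (X N) *m X N)))
       @ \oo --> (0 : R) ->
     forall n m : nat,
       (fun N : nat =>
          Normc.normc (expect beta (e N) (lam N) (Eminus c N ^+ n *m Eplus c N ^+ m *m X N)))
         @ \oo --> (0 : R)).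
Proof.
move=> Tc0 beta0 heig hlim c0.
have ortho : forall N a b, adj (e N a) *m e N b = (a == b)%:R%:M.
  by move=> N; case: (heig N).
split.
  move=> r nn mm.
  have [Cn hC] := @word R r nn mm.
  set L := (\sum_(j < r) nn j + \sum_(j < r) mm j)%N.
  set K := Cn%:R / c ^+ L.
  have K0 : 0 <= K by rewrite divr_ge0 ?ler0n ?exprn_ge0 // ltW.
  apply: (@squeeze_cvgr _ _ _ _ (fun _ => 0) (fun N => 2 * K * harmonic N)).
  - exists 1%N => // N /= hN; apply/andP; split; first exact: normc_ge0'.
    apply: le_trans (bound_i beta (lam N) c0 hN (ortho N) hC) _.
    rewrite -/L invfM mulrA -/K.
    have := ler_wpM2l K0 (inv_le_harm R N hN); rewrite /harmonic /= => h.
    by apply: le_trans h _; rewrite mulrA [K * 2]mulrC.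
  - exact: cvg_cst.
  - rewrite -(mulr0 (2 * K)); apply: cvgMl_tmp; exact: cvg_harmonic.
move=> X hX n m.
set g := fun N : nat => Normc.normc (expect beta (e N) (lam N) (adj (X N) *m X N)).
apply: (@squeeze_cvgr _ _ _ _ (fun _ => 0)
          (fun N => (c ^+ (n + m))^-1 * Num.sqrt (g N))).
- exists 1%N => // N /= hN; apply/andP; split; first exact: normc_ge0'.
  exact: (bound_ii beta (lam N) (X N) n m c0 hN (ortho N)).
- exact: cvg_cst.
- rewrite -(mulr0 (c ^+ (n + m))^-1) -sqrtr0; apply: cvgMl_tmp.
  exact: (continuous_cvg _ (@sqrt_continuous R 0) hX).
Qed.
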